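(* Let $M\ge1$, $\beta,\hat\beta>0$, and suppose $$\beta^{-1}>1+(M-1)\,m_0(\hat\beta)^2 .$$ Then the only solution $\mathbf{p}\in\mathbb{R}^M$ of $$\mathbf{p}=\big\langle \mathbf{s}\tanh(\beta\,\mathbf{s}\cdot\mathbf{p})\big\rangle_{\mathbf{s},\hat\beta}$$ is $\mathbf{p}=\mathbf{0}$, and consequently $m:=\langle\tanh(\beta\,\mathbf{s}\cdot\mathbf{p})\rangle_{\mathbf{s},\hat\beta}=0$.
   Context: $m_0(\hat\beta)$ is the largest nonnegative solution of $m=\tanh(\hat\beta m)$. $\langle\cdot\rangle_{\mathbf{s},\hat\beta}$ denotes expectation over $\mathbf{s}\in\{-1,1\}^M$ with i.i.d. entries of mean $m_0(\hat\beta)$, i.e. with weight $e^{\hat\beta m_0(\hat\beta)\sum_\mu s_\mu}/(2\cosh(\hat\beta m_0(\hat\beta)))^M$. This is the stationarity equation of $g(\mathbf{p};\hat\beta,\beta)=\log2-\beta|\mathbf{p}|^2/2+\langle\log\cosh(\beta\mathbf{s}\cdot\mathbf{p})\rangle_{\mathbf{s},\hat\beta}$. *)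

(* Defs.v *)
From HB Require Import structures.
From mathcomp Require Import all_boot all_order all_algebra.
From mathcomp Require Import all_classical all_reals all_analysis.
Set Implicit Arguments. Unset Strict Implicit. Unset Printing Implicit Defensive.
Import Order.TTheory GRing.Theory Num.Theory.
Local Open Scope ring_scope.
Local Open Scope classical_set_scope.

Definition coshR {R : realType} (x : R) : R := (expR x + expR (- x)) / 2.
Definition sinhR {R : realType} (x : R) : R := (expR x - expR (- x)) / 2.
Definition tanhR {R : realType} (x : R) : R := sinhR x / coshR x.

(* m_0(bh): largest nonnegative solution of m = tanh(bh m),
   taken as the supremum of the (nonempty, bounded, closed) solution set *)
Definition m0 {R : realType} (bh : R) : R :=
  sup [set m : R | 0 <= m /\ m = tanhR (bh * m)].

Definition spin {R : realType} (b : bool) : R := if b then 1 else -1.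

Definition dotsp {R : realType} {M : nat} (s : {ffun 'I_M -> bool}) (p : 'I_M -> R) : R :=
  \sum_(i < M) spin (s i) * p i.

Definition savg {R : realType} (M : nat) (bh : R) (f : {ffun 'I_M -> bool} -> R) : R :=
  \sum_(s : {ffun 'I_M -> bool})
     expR (bh * m0 bh * \sum_(i < M) spin (R:=R) (s i)) / (2 * coshR (bh * m0 bh)) ^+ M * f s.

(* Main.v *)
Require Import Defs.
From HB Require Import structures.
From mathcomp Require Import all_boot all_order all_algebra.
From mathcomp Require Import all_classical all_reals all_analysis.
From mathcomp Require Import ring lra.
Import Order.TTheory GRing.Theory Num.Theory.
Import numFieldNormedType.Exports.
Local Open Scope classical_set_scope.
Local Open Scope ring_scope.

Lemma expRNK {R : realType} (x : R) : expR x * expR (- x) = 1.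
Proof. by rewrite -expRD subrr expR0. Qed.

Lemma coshR_gt0 {R : realType} (x : R) : 0 < coshR x.
Proof. rewrite /coshR; apply: divr_gt0 => //; apply: addr_gt0; exact: expR_gt0. Qed.

Lemma tanh_le_id {R : realType} (v : R) : 0 <= v -> tanhR v <= v.
Proof.
move=> v0.
pose h := fun v : R => 1 + v - expR v * expR v * (1 - v).
pose dh := fun x : R => 1 + expR x * expR x * (2 * x - 1).
have hd : forall x : R, is_derive x (1:R) h (dh x).
  move=> x; apply: is_derive_eq; rewrite /dh /GRing.scale /=; ring.
have [c c0v hc] : exists2 c, c \in `[0, v] & h v - h 0 = dh c * (v - 0).
  apply: (MVT_segment (f:=h) (df:=dh) v0 (fun x _ => hd x)).
  have ch : forall x : R, {for x, continuous h} by move=> x; apply/differentiable_continuous/derivable1_diffP; exact: ex_derive.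
  exact: continuous_subspaceT.
have h0 : h 0 = 0 by rewrite /h expR0; ring.
have dhc : 0 <= dh c.
  rewrite /dh.
  have := expR_ge1Dx (- (2 * c)).
  have e1 := expRNK c.
  have := expR_gt0 c.
  rewrite (_ : - (2 * c) = - c + - c); last by ring.
  rewrite expRD.
  set a := expR c; set b := expR (- c) => ha hb.
  have hab : a * a * (b * b) = 1 by rewrite mulrACA e1 mulr1.
  have hb' : 0 <= b * b - (1 + (- c - c)) by rewrite subr_ge0.
  have := mulr_ge0 (mulr_ge0 (ltW ha) (ltW ha)) hb'.
  nra.
have hv : 0 <= h v.
  move: hc; rewrite h0 subr0 => hc.
  have := mulr_ge0 dhc v0. lra.
rewrite /tanhR /sinhR /coshR.
have e1 := expRNK v.
have := expR_gt0 v. have := expR_gt0 (-v).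
move: hv; rewrite /h.
set a := expR v; set b := expR (- v) => hv hb ha.
rewrite ler_pdivrMr; last by lra.
have key : v * ((a + b) / 2) - (a - b) / 2 = b * (1 + v - a * a * (1 - v)) / 2.
  rewrite (_ : b * (1 + v - a * a * (1 - v)) = b + b * v - (a * b) * a * (1 - v)); last by ring.
  rewrite e1; ring.
rewrite -subr_ge0 key; apply: divr_ge0 => //; exact: mulr_ge0 (ltW hb) hv.
Qed.

Lemma tanhE {R : realType} (x : R) :
  tanhR x = (expR x * expR x - 1) / (expR x * expR x + 1).
Proof.
rewrite /tanhR /sinhR /coshR.
have e1 := expRNK x. have := expR_gt0 x.
set a := expR x; set b := expR (- x) => ha.
have hb : b = a^-1 by apply: (@mulfI _ a); rewrite ?gt_eqF // e1 mulfV // gt_eqF.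
rewrite hb. field. apply/andP; split; rewrite ?gt_eqF //; nra.
Qed.

Lemma tanh_cont {R : realType} (x : R) : {for x, continuous (@tanhR R)}.
Proof.
have -> : @tanhR R = fun x => (expR x * expR x - 1) * (expR x * expR x + 1)^-1.
  by apply: funext => y; rewrite tanhE.
apply: continuousM.
  apply: continuousB; last exact: cst_continuous.
  by apply: continuousM; exact: continuous_expR.
apply: continuousV.
  have := expR_gt0 x; nra.
apply: continuousD; last exact: cst_continuous.
by apply: continuousM; exact: continuous_expR.
Qed.

Lemma tanh0 {R : realType} : tanhR (0:R) = 0.
Proof. by rewrite /tanhR /sinhR oppr0 subrr !mul0r. Qed.

Lemma tanhN {R : realType} (x : R) : tanhR (- x) = - tanhR x.
Proof.
rewrite /tanhR /sinhR /coshR opprK; rewrite (addrC (expR (- x)) (expR x)).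
ring.
Qed.

Lemma tanh_ge0 {R : realType} (x : R) : 0 <= x -> 0 <= tanhR x.
Proof.
move=> x0; rewrite /tanhR; apply: divr_ge0; last exact/ltW/coshR_gt0.
rewrite /sinhR; apply: divr_ge0 => //; rewrite subr_ge0 ler_expR; lra.
Qed.

Lemma tanh_lt1 {R : realType} (x : R) : tanhR x < 1.
Proof.
rewrite /tanhR ltr_pdivrMr ?coshR_gt0 // mul1r /sinhR /coshR.
have := expR_gt0 (- x); lra.
Qed.

Lemma mul_tanh_le {R : realType} (y : R) : y * tanhR y <= y ^+ 2.
Proof.
have key : forall z : R, 0 <= z -> z * tanhR z <= z ^+ 2.
  move=> z z0; rewrite expr2; apply: ler_wpM2l => //; exact: tanh_le_id.
case: (lerP 0 y) => y0; first exact: key.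
have hy : 0 <= - y by lra.
have := key (- y) hy.
by rewrite tanhN mulrNN sqrrN.
Qed.

Lemma m0_prop {R : realType} (bh : R) : 0 <= bh ->
  0 <= m0 bh /\ tanhR (bh * m0 bh) <= m0 bh.
Proof.
move=> bh0.
set S := [set m : R | 0 <= m /\ m = tanhR (bh * m)].
have S0 : S 0 by split => //; rewrite mulr0 tanh0.
have ub1 : ubound S 1.
  by move=> m [_ ->]; exact/ltW/tanh_lt1.
have hub : has_ubound S by exists 1.
have supub := ub_le_sup hub.
have m0ge0 : 0 <= m0 bh by exact: supub.
have m0le1 : m0 bh <= 1 by apply: ge_sup => //; exists 0.
split => //.
rewrite leNgt; apply/negP => hlt.
pose g := fun m : R => tanhR (bh * m) - m.
have gc : forall x : R, {for x, continuous g}.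
  move=> x; apply: continuousB; last exact: cvg_id.
  apply: (@continuous_comp _ _ _ (fun m : R => bh * m) tanhR); last exact: tanh_cont.
  apply: continuousM; [exact: cst_continuous | exact: cvg_id].
have [c cin gc0] : exists2 c, c \in `[m0 bh, 1] & g c = 0.
  apply: IVT => //.
    by apply: continuous_subspaceT; exact: gc.
  have g1 : g 1 < 0 by rewrite /g mulr1 subr_lt0; exact: tanh_lt1.
  have gm : 0 < g (m0 bh) by rewrite /g subr_gt0.
  rewrite ge_min le_max; apply/andP; split; apply/orP; [right|left]; exact: ltW.
move: cin; rewrite in_itv /= => /andP [c1 c2].
have Sc : S c by split; [exact: le_trans c1 | move: gc0; rewrite /g; move/eqP; rewrite subr_eq0 => /eqP ->].
have cle := supub _ Sc.
have ceq : c = m0 bh by apply/eqP; rewrite eq_le cle c1.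
by move: gc0; rewrite ceq /g => /eqP; rewrite subr_eq0 => /eqP h; move: hlt; rewrite h ltxx.
Qed.

Lemma savg_prod {R : realType} (M : nat) (bh : R) (A : {set 'I_M}) :
  @savg R M bh (fun s => \prod_(i in A) spin (s i)) = tanhR (bh * m0 bh) ^+ #|A|.
Proof.
rewrite /savg.
set a := bh * m0 bh.
set c := 2 * coshR a.
have c0 : 0 < c by rewrite /c mulr_gt0 // coshR_gt0.
pose q := fun b : bool => expR (a * spin b) / c.
pose F := fun (i : 'I_M) (b : bool) => q b * (if i \in A then spin b else 1).
transitivity (\sum_(s : {ffun 'I_M -> bool}) \prod_(i < M) F i (s i)).
  apply: eq_bigr => s _.
  rewrite /F big_split /= -big_mkcond /=; congr (_ * _).
  rewrite /q big_split /= -expR_sum -mulr_sumr.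
  by rewrite prodr_const card_ord exprVn.
rewrite -bigA_distr_bigA /=.
have hs : forall i, \sum_(b : bool) F i b = if i \in A then tanhR a else 1.
  move=> i; rewrite big_bool /F /q /= mulr1 mulrN1.
  case: (i \in A); rewrite ?mulr1.
    rewrite /tanhR /sinhR /c /coshR; field.
    rewrite gt_eqF //; exact: addr_gt0 (expR_gt0 _) (expR_gt0 _).
  rewrite -mulrDl /c /coshR; field.
  have := expR_gt0 a; have := expR_gt0 (- a); lra.
rewrite (eq_bigr _ (fun i _ => hs i)) -big_mkcond /=.
exact: prodr_const.
Qed.

Section Savg.
Context {R : realType} (M : nat) (bh : R).
Local Notation sv := (@savg R M bh).

Lemma savg_ext f g : (forall s, f s = g s) -> sv f = sv g.
Proof. by move=> h; apply: eq_bigr => s _; rewrite h. Qed.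

Lemma savgZ k f : sv (fun s => k * f s) = k * sv f.
Proof. rewrite /savg mulr_sumr; apply: eq_bigr => s _; ring. Qed.

Lemma savg_sum n (f : 'I_n -> {ffun 'I_M -> bool} -> R) :
  sv (fun s => \sum_(i < n) f i s) = \sum_(i < n) sv (f i).
Proof. rewrite /savg exchange_big /=; apply: eq_bigr => s _; by rewrite mulr_sumr. Qed.

Lemma savg_le f g : (forall s, f s <= g s) -> sv f <= sv g.
Proof.
move=> h; apply: ler_sum => s _; apply: ler_wpM2l => //.
apply: divr_ge0; first exact/ltW/expR_gt0.
apply: exprn_ge0; apply: mulr_ge0 => //; exact/ltW/coshR_gt0.
Qed.

Lemma savg1 : sv (fun _ => 1) = 1.
Proof.
transitivity (sv (fun s => \prod_(i in (finset.set0 : {set 'I_M})) spin (s i))).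
  by apply: savg_ext => s; rewrite big_set0.
by rewrite savg_prod cards0 expr0.
Qed.

Lemma savg_pair (mu nu : 'I_M) :
  sv (fun s => spin (s mu) * spin (s nu)) =
  if nu == mu then 1 else tanhR (bh * m0 bh) ^+ 2.
Proof.
case: eqP => [->|/eqP hne].
  rewrite -savg1; apply: savg_ext => s; by case: (s mu); rewrite /spin ?mulr1 ?mulrNN ?mulr1.
have := savg_prod M bh [set mu; nu]; rewrite cards2 eq_sym hne => <-.
apply: savg_ext => s.
rewrite big_setU1 ?big_set1 // inE eq_sym; exact: hne.
Qed.
End Savg.

Lemma sum_sq_le {R : realType} (M : nat) (p : 'I_M -> R) :
  (\sum_(i < M) p i) ^+ 2 <= M%:R * \sum_(i < M) p i ^+ 2.
Proof.
have h : 0 <= \sum_(i < M) \sum_(j < M) (p i - p j) ^+ 2.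
  by apply: sumr_ge0 => i _; apply: sumr_ge0 => j _; exact: sqr_ge0.
set P := \sum_(i < M) p i. set S := \sum_(i < M) p i ^+ 2.
have e : forall i, \sum_(j < M) (p i - p j) ^+ 2 = M%:R * p i ^+ 2 + S - 2 * p i * P.
  move=> i.
  rewrite (eq_bigr (fun j => p i ^+ 2 + p j ^+ 2 - 2 * p i * p j)); last by move=> j _; ring.
  by rewrite sumrB big_split /= sumr_const card_ord /P mulr_sumr [M%:R * _]mulr_natl.
rewrite (eq_bigr _ (fun i _ => e i)) in h.
rewrite sumrB big_split /= sumr_const card_ord -mulr_natl -mulr_sumr -mulr_suml in h.
rewrite -/S -/P in h.
have e2 : \sum_(i < M) 2 * p i = 2 * P by rewrite mulr_sumr.
rewrite e2 -[S *+ M]mulr_natl mulr1 in h.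
rewrite expr2; lra.
Qed.

Theorem proposition5 (R : realType) (M : nat) (beta bh : R) :
  (1 <= M)%N -> 0 < beta -> 0 < bh ->
  beta^-1 > 1 + (M%:R - 1) * (m0 bh) ^+ 2 ->
  (forall p : 'I_M -> R,
     (forall mu : 'I_M,
        p mu = @savg R M bh (fun s => spin (s mu) * tanhR (beta * dotsp s p)))
     <-> p = (fun _ => 0))
  /\
  (forall p : 'I_M -> R,
     (forall mu : 'I_M,
        p mu = @savg R M bh (fun s => spin (s mu) * tanhR (beta * dotsp s p))) ->
     @savg R M bh (fun s => tanhR (beta * dotsp s p)) = 0).
Proof.
move=> M1 b0 bh0 hK.
have [m0ge0 tle] := m0_prop bh (ltW bh0).
set t := tanhR (bh * m0 bh) in tle.
have t0 : 0 <= t by apply: tanh_ge0; apply: mulr_ge0 => //; exact: ltW.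
set K := 1 + (M%:R - 1) * m0 bh ^+ 2 in hK.
have hbK : beta * K < 1.
  have bn0 : beta != 0 by rewrite gt_eqF.
  by rewrite -(mulfV bn0) ltr_pM2l.
have dot0 : forall s : {ffun 'I_M -> bool}, dotsp s (fun _ : 'I_M => (0:R)) = 0.
  by move=> s; rewrite /dotsp big1 // => i _; rewrite mulr0.
have zero_fix : forall f : {ffun 'I_M -> bool} -> R,
    @savg R M bh (fun s => f s * tanhR (beta * dotsp s (fun _ => 0))) = 0.
  move=> f; rewrite /savg big1 // => s _; by rewrite dot0 mulr0 tanh0 !mulr0.
have fixed0 : forall p : 'I_M -> R,
    (forall mu : 'I_M,
        p mu = @savg R M bh (fun s => spin (s mu) * tanhR (beta * dotsp s p))) ->
    p = (fun _ => 0).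
  move=> p hp.
  pose d := fun s : {ffun 'I_M -> bool} => dotsp s p.
  pose T := fun s : {ffun 'I_M -> bool} => tanhR (beta * d s).
  pose S := \sum_(mu < M) p mu ^+ 2.
  pose P := \sum_(mu < M) p mu.
  have S0 : 0 <= S by apply: sumr_ge0 => i _; exact: sqr_ge0.
  have e1 : S = @savg R M bh (fun s => d s * T s).
    transitivity (\sum_(mu < M) @savg R M bh (fun s => p mu * (spin (s mu) * T s))).
      apply: eq_bigr => mu _; rewrite savgZ expr2 {2}(hp mu) //.
    rewrite -savg_sum; apply: savg_ext => s.
    rewrite /d /dotsp mulr_suml; apply: eq_bigr => mu _; ring.
  have e2 : @savg R M bh (fun s => d s * T s) <= beta * @savg R M bh (fun s => d s ^+ 2).
    rewrite -savgZ; apply: savg_le => s.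
    have := mul_tanh_le (beta * d s); rewrite /T.
    set y := tanhR _ => hy.
    nra.
  have e3 : @savg R M bh (fun s => d s ^+ 2) = t ^+ 2 * P ^+ 2 + (1 - t ^+ 2) * S.
    transitivity (@savg R M bh (fun s => \sum_(mu < M) \sum_(nu < M)
                     p mu * p nu * (spin (s mu) * spin (s nu)))).
      apply: savg_ext => s; rewrite /d /dotsp expr2 mulr_suml.
      apply: eq_bigr => mu _; rewrite mulr_sumr; apply: eq_bigr => nu _; ring.
    rewrite savg_sum.
    transitivity (\sum_(mu < M) (t ^+ 2 * p mu * P + (1 - t ^+ 2) * p mu ^+ 2)).
      apply: eq_bigr => mu _; rewrite savg_sum.
      rewrite (eq_bigr (fun nu => t ^+ 2 * p mu * p nu +
                  (if nu == mu then (1 - t ^+ 2) * p mu ^+ 2 else 0))); last first.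
        move=> nu _; rewrite savgZ savg_pair -/t.
        by case: eqP => [->|_]; ring.
      by rewrite big_split /= -big_mkcond big_pred1_eq /P mulr_sumr.
    rewrite big_split /= /S /P -mulr_suml -!mulr_sumr.
    by rewrite [in RHS]expr2 mulrA.
  have e4 := sum_sq_le _ p.
  rewrite -/P -/S in e4.
  have hM : 0 <= M%:R - 1 :> R by rewrite subr_ge0 ler1n.
  have ht : t ^+ 2 <= m0 bh ^+ 2 by rewrite ler_sqr.
  have h1 : t ^+ 2 * P ^+ 2 <= t ^+ 2 * (M%:R * S) by apply: ler_wpM2l => //; exact: sqr_ge0.
  have h2 : 0 <= (M%:R - 1) * S * (m0 bh ^+ 2 - t ^+ 2).
    by apply: mulr_ge0; [exact: mulr_ge0 | rewrite subr_ge0].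
  have hKS : @savg R M bh (fun s => d s ^+ 2) <= K * S.
    rewrite e3 /K. nra.
  have hS : S <= beta * K * S.
    rewrite -mulrA; apply: (le_trans _ (ler_wpM2l (ltW b0) hKS)); rewrite e1; exact: e2.
  have SS : S = 0.
    apply/eqP; rewrite eq_le S0 andbT.
    set X := beta * K in hS hbK. nra.
  apply: funext => mu.
  have : p mu ^+ 2 = 0.
    by apply: (psumr_eq0P (P:=predT) (F:=fun i => p i ^+ 2) (fun i _ => sqr_ge0 (p i)) SS).
  by move/eqP; rewrite sqrf_eq0 => /eqP.
split.
  move=> p; split; first exact: fixed0.
  by move=> -> mu; rewrite zero_fix.
move=> p hp; rewrite (fixed0 p hp).
rewrite -[RHS](zero_fix (fun _ => 1)); apply: savg_ext => s; by rewrite mul1r.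
Qed.
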